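(* Let $(A,B,s,t,\Delta)$ be a left multiplier bialgebroid, and let $I^s\subseteq B$ be the linear span of all $\phi(a)$ with $a\in A$ and $\phi\colon A\to B$ linear satisfying $\phi(s(x)a)=x\phi(a)$ for all $x\in B,a\in A$, and $I^t\subseteq B$ the linear span of all $\psi(a)$ with $a\in A$ and $\psi\colon A\to B$ linear satisfying $\psi(t(x)a)=\psi(a)x$ for all $x,a$. If $s(I^t)A=A=t(I^s)A$, then $I^t=I^tI^s=I^s$ and this is an idempotent, essential two-sided ideal in $B$.
   Context: All algebras are associative complex algebras, not necessarily unital. For an algebra $A$ with $A_A$ non-degenerate, $L(A)$ denotes right $A$-module endomorphisms of $A$ (containing $A$ via left multiplication) and $M(A)=\{T\in L(A):aT\in A\ \forall a\}$. A left multiplier bialgebroid is a tuple $(A,B,s,t,\Delta)$: (i) $A,B$ algebras, $A_A$ non-degenerate and idempotent; (ii) $s\colon B\to M(A)$ homomorphism, $t\colon B\to M(A)$ anti-homomorphism with commuting images, $s,t$ injective, $s(B)A=A=t(B)A$; ${}_BA\otimes A^B$, the quotient of $A\otimes A$ by the span of $s(x)a\otimes b-a\otimes t(x)b$, is non-degenerate as a right module over $A\otimes1$ and $1\otimes A$; (iii) $\Delta$ is an algebra homomorphism into the algebra of endomorphisms $T$ of ${}_BA\otimes A^B$ for which $T(a\otimes1),T(1\otimes b)\in{}_BA\otimes A^B$ exist with $T(a\otimes b)=T(a\otimes1)(1\otimes b)=T(1\otimes b)(a\otimes1)$; (iv) $\Delta(s(x)t(y)as(x')t(y'))=(t(y)\otimes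 s(x))\Delta(a)(t(y')\otimes s(x'))$; (v) if $\Delta(b)(1\otimes c)=\sum p_i\otimes q_i$ and $\Delta(b)(a\otimes1)=\sum u_j\otimes v_j$ then $\sum\Delta(p_i)(a\otimes1)\otimes q_i=\sum u_j\otimes\Delta(v_j)(1\otimes c)$ in $A^{\otimes3}$ modulo the span of $s(x)a\otimes b\otimes c-a\otimes t(x)b\otimes c$ and $a\otimes s(x)b\otimes c-a\otimes b\otimes t(x)c$. A two-sided ideal $I$ of $B$ is essential if $xI=0$ or $Ix=0$ implies $x=0$; idempotent means $II=I$. *)

(* Defs.v *)
From HB Require Import structures.
From mathcomp Require Import all_boot all_order all_algebra.
From mathcomp Require Export reals complex.
Set Implicit Arguments. Unset Strict Implicit. Unset Printing Implicit Defensive.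
Import GRing.Theory.
Local Open Scope ring_scope.

Notation CC R := (R[i])%C.

Section Generic.
Variables (K : fieldType) (A : lmodType K).

Definition seteq (P Q : A -> Prop) := forall v, P v <-> Q v.
Definition setall : A -> Prop := fun _ => True.

Definition lspan (P : A -> Prop) : A -> Prop :=
  fun v => exists (n : nat) (c : 'I_n -> K) (w : 'I_n -> A),
    (forall i, P (w i)) /\ v = \sum_(i < n) c i *: w i.

Definition is_linear (W : lmodType K) (f : A -> W) :=
  forall k a b, f (k *: a + b) = k *: f a + f b.

Variable mul : A -> A -> A.

Definition nu_algebra : Prop :=
  [/\ forall a b c, mul a (mul b c) = mul (mul a b) c,
      forall k a b c, mul (k *: a + b) c = k *: mul a c + mul b c
    & forall k a b c, mul c (k *: a + b) = k *: mul c a + mul c b].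

Definition prodset (P Q : A -> Prop) : A -> Prop :=
  lspan (fun v => exists a b, [/\ P a, Q b & v = mul a b]).

Definition right_nondeg := forall a, (forall b, mul a b = 0) -> a = 0.
Definition alg_idempotent := seteq (prodset setall setall) setall.

Definition in_L (T : A -> A) :=
  is_linear T /\ forall a b, T (mul a b) = mul (T a) b.
(* M(A) = { T in L(A) : a T in A for all a } *)
Definition in_M (T : A -> A) :=
  in_L T /\ forall a, exists c, forall b, mul a (T b) = mul c b.

Definition is_subspace (P : A -> Prop) :=
  P 0 /\ forall k u v, P u -> P v -> P (k *: u + v).
Definition two_sided_ideal (P : A -> Prop) :=
  is_subspace P /\ forall x y, P y -> P (mul x y) /\ P (mul y x).
Definition ideal_idempotent (P : A -> Prop) := seteq (prodset P P) P.
Definition ideal_essential (P : A -> Prop) :=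
  forall x, ((forall y, P y -> mul x y = 0) \/ (forall y, P y -> mul y x = 0))
            -> x = 0.
End Generic.

Section Bialgebroid.
Variables (K : fieldType) (A B : lmodType K)
          (mA : A -> A -> A) (mB : B -> B -> B)
          (s t : B -> A -> A).

(* Formal finite sums  sum_i a_i (x) b_i  representing elements of
   _B A (x) A^B;  two formal sums are identified iff every linear functional
   on A (x) A vanishing on the lspan of  s(x)a (x) b - a (x) t(x)b  (i.e. every
   balanced bilinear form) takes the same value on them.  Over a field this is
   exactly equality in the quotient space. *)
Definition tens := seq (A * A).
Definition bilin (f : A -> A -> K) :=
  (forall k a a' b, f (k *: a + a') b = k * f a b + f a' b) /\
  (forall k a b b', f a (k *: b + b') = k * f a b + f a b').
Definition tbalanced (f : A -> A -> K) :=
  forall x a b, f (s x a) b = f a (t x b).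
Definition teval (f : A -> A -> K) (xi : tens) := \sum_(p <- xi) f p.1 p.2.
Definition teq (xi eta : tens) :=
  forall f, bilin f -> tbalanced f -> teval f xi = teval f eta.

Definition tscale (k : K) (xi : tens) : tens := [seq (k *: p.1, p.2) | p <- xi].
Definition tmulr1 (a : A) (xi : tens) : tens := [seq (mA p.1 a, p.2) | p <- xi].
Definition tmul1r (b : A) (xi : tens) : tens := [seq (p.1, mA p.2 b) | p <- xi].
Definition tlmul (S T : A -> A) (xi : tens) : tens := [seq (S p.1, T p.2) | p <- xi].

(* triple tensors  A (x) A (x) A  modulo the lspan of
   s(x)a(x)b(x)c - a(x)t(x)b(x)c  and  a(x)s(x)b(x)c - a(x)b(x)t(x)c *)
Definition tens3 := seq (A * A * A).
Definition trilin (f : A -> A -> A -> K) :=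
  [/\ forall k a a' b c, f (k *: a + a') b c = k * f a b c + f a' b c,
      forall k a b b' c, f a (k *: b + b') c = k * f a b c + f a b' c
    & forall k a b c c', f a b (k *: c + c') = k * f a b c + f a b c'].
Definition tbalanced3 (f : A -> A -> A -> K) :=
  (forall x a b c, f (s x a) b c = f a (t x b) c) /\
  (forall x a b c, f a (s x b) c = f a b (t x c)).
Definition teval3 (f : A -> A -> A -> K) (xi : tens3) :=
  \sum_(p <- xi) f p.1.1 p.1.2 p.2.
Definition teq3 (xi eta : tens3) :=
  forall f, trilin f -> tbalanced3 f -> teval3 f xi = teval3 f eta.

(* Delta(a) is an endomorphism of _B A (x) A^B, given on representatives by
   D a;  D1 a a' represents Delta(a)(a' (x) 1)  and  D2 a b represents
   Delta(a)(1 (x) b). *)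
Definition left_multiplier_bialgebroid
    (D : A -> tens -> tens) (D1 D2 : A -> A -> tens) : Prop :=
  [/\ nu_algebra mA, nu_algebra mB, right_nondeg mA & alg_idempotent mA] /\
  ((forall x, in_M mA (s x)) /\ (forall x, in_M mA (t x))) /\
  ((forall k x y a, s (k *: x + y) a = k *: s x a + s y a) /\
   (forall x y a, s (mB x y) a = s x (s y a))) /\
  ((forall k x y a, t (k *: x + y) a = k *: t x a + t y a) /\
   (forall x y a, t (mB x y) a = t y (t x a))) /\
  (forall x y a, s x (t y a) = t y (s x a)) /\
  ((forall x y, (forall a, s x a = s y a) -> x = y) /\
   (forall x y, (forall a, t x a = t y a) -> x = y)) /\
  (seteq (lspan (fun v => exists x a, v = s x a)) (@setall _ A) /\
   seteq (lspan (fun v => exists x a, v = t x a)) (@setall _ A)) /\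
  ((forall xi, (forall a, teq (tmulr1 a xi) [::]) -> teq xi [::]) /\
   (forall xi, (forall b, teq (tmul1r b xi) [::]) -> teq xi [::])) /\
  ((forall a xi eta, teq xi eta -> teq (D a xi) (D a eta)) /\
   (forall a xi eta, teq (D a (xi ++ eta)) (D a xi ++ D a eta)) /\
   (forall a k xi, teq (D a (tscale k xi)) (tscale k (D a xi)))) /\
  [/\ forall a a' b, teq (D a [:: (a', b)]) (tmul1r b (D1 a a')) /\
                     teq (D a [:: (a', b)]) (tmulr1 a' (D2 a b)),
      forall k a a' xi, teq (D (k *: a + a') xi) (tscale k (D a xi) ++ D a' xi)
    & forall a a' xi, teq (D (mA a a') xi) (D a (D a' xi))] /\
  (* (iv): Delta(s(x)t(y) a s(x')t(y')) = (t(y) (x) s(x)) Delta(a) (t(y') (x) s(x')),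
     where c = s(x)t(y) a s(x')t(y') is characterised by
     c b = (s(x)t(y)a) (s(x')t(y') b) for all b *)
  (forall x y x' y' a c,
      (forall b, mA c b = mA (s x (t y a)) (s x' (t y' b))) ->
      forall xi, teq (D c xi)
                     (tlmul (t y) (s x) (D a (tlmul (t y') (s x') xi)))) /\
  (forall a b c (pq uv : tens),
      teq (D2 b c) pq -> teq (D1 b a) uv ->
      teq3 (flatten [seq [seq (r.1, r.2, p.2) | r <- D1 p.1 a] | p <- pq])
           (flatten [seq [seq (u.1, r.1, r.2) | r <- D2 u.2 c] | u <- uv])).

Definition Is_set : B -> Prop :=
  lspan (fun v => exists (phi : A -> B) a,
          [/\ is_linear phi, forall x a', phi (s x a') = mB x (phi a')
            & v = phi a]).
Definition It_set : B -> Prop :=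
  lspan (fun v => exists (psi : A -> B) a,
          [/\ is_linear psi, forall x a', psi (t x a') = mB (psi a') x
            & v = psi a]).
End Bialgebroid.

(* Main.v *)
Require Import Defs.
From mathcomp Require Import all_boot all_order all_algebra.
From mathcomp Require Import reals complex.
Import GRing.Theory.
Set Implicit Arguments. Unset Strict Implicit.
Local Open Scope ring_scope.

Section Helpers.
Variable K : fieldType.

Lemma lin0 (U W : lmodType K) (f : U -> W) : is_linear f -> f 0 = 0.
Proof.
move=> hf; have := hf 1 0 0; rewrite !scale1r addr0 => e.
have : f 0 - f 0 = f 0 + f 0 - f 0 by rewrite -e.
by rewrite addrK subrr.
Qed.

Lemma lspan_map (U W : lmodType K) (P : U -> Prop) (Q : W -> Prop) (f : U -> W) :
  is_linear f -> is_subspace Q -> (forall u, P u -> Q (f u)) ->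
  forall u, lspan P u -> Q (f u).
Proof.
move=> hf [Q0 QS] hPQ u [n [c [w [Hw ->]]]].
elim: n c w Hw => [|n IH] c w Hw; first by rewrite big_ord0 (lin0 hf).
rewrite big_ord_recr /= addrC hf; apply: QS; first exact: hPQ.
exact: (IH (fun i => c (widen_ord (leqnSn n) i)) (fun i => w (widen_ord (leqnSn n) i))).
Qed.

Lemma lspan_subspace (U : lmodType K) (P : U -> Prop) : is_subspace (lspan P).
Proof.
split.
  by exists 0%N, (fun _ => 0), (fun _ => 0); split; [case | rewrite big_ord0].
move=> k u v [m [c1 [w1 [H1 ->]]]] [n [c2 [w2 [H2 ->]]]].
exists (m + n)%N,
  (fun i => match split i with inl j => k * c1 j | inr j => c2 j end),
  (fun i => match split i with inl j => w1 j | inr j => w2 j end).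
split; first by move=> i; case: (split i).
rewrite big_split_ord /= scaler_sumr; congr (_ + _); apply: eq_bigr => i _.
  by rewrite (unsplitK (inl i)) scalerA.
by rewrite (unsplitK (inr i)).
Qed.

Lemma lspan_in (U : lmodType K) (P : U -> Prop) u : P u -> lspan P u.
Proof.
by move=> h; exists 1%N, (fun _ => 1), (fun _ => u); split => //; rewrite big_ord1 scale1r.
Qed.

Lemma lspan_sub (U : lmodType K) (P Q : U -> Prop) :
  is_subspace Q -> (forall u, P u -> Q u) -> forall u, lspan P u -> Q u.
Proof. move=> hQ hPQ; exact: (@lspan_map U U P Q id) => //. Qed.
End Helpers.

Theorem lemma3p8 (R : realType) (A B : lmodType (CC R))
    (mA : A -> A -> A) (mB : B -> B -> B) (s t : B -> A -> A)
    (D : A -> tens A -> tens A) (D1 D2 : A -> A -> tens A) :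
  left_multiplier_bialgebroid mA mB s t D D1 D2 ->
  seteq (lspan (fun v => exists x a, It_set mB t x /\ v = s x a)) (@setall _ A) ->
  seteq (lspan (fun v => exists x a, Is_set mB s x /\ v = t x a)) (@setall _ A) ->
  [/\ seteq (It_set mB t) (prodset mB (It_set mB t) (Is_set mB s)),
      seteq (prodset mB (It_set mB t) (Is_set mB s)) (Is_set mB s),
      two_sided_ideal mB (Is_set mB s),
      ideal_idempotent mB (Is_set mB s)
    & ideal_essential mB (Is_set mB s)].
Proof.
move=> [[_ nuB _ _] [[sM tM] [[slin smul] [[tlin tmul] [_ [[sinj tinj] _]]]]]] h1 h2.
case: nuB => massoc mdl mdr.
have sl x : is_linear (s x) by case: (sM x) => [[]].
have tl x : is_linear (t x) by case: (tM x) => [[]].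
have Bl x : is_linear (fun b => mB x b) by move=> k a b; exact: mdr.
have Br x : is_linear (fun b => mB b x) by move=> k a b; exact: mdl.
have IsS : is_subspace (Is_set mB s) by exact: lspan_subspace.
have ItS : is_subspace (It_set mB t) by exact: lspan_subspace.
have P12S : is_subspace (prodset mB (It_set mB t) (Is_set mB s)) by exact: lspan_subspace.
have Is_left x y : Is_set mB s y -> Is_set mB s (mB x y).
  apply: (lspan_map (f := fun b => mB x b) (Bl x) IsS) => _ [phi [a [phil phie ->]]].
  by apply: lspan_in; exists phi, (s x a); split => //; rewrite phie.
have Is_right x y : Is_set mB s y -> Is_set mB s (mB y x).
  apply: (lspan_map (f := fun b => mB b x) (Br x) IsS) => _ [phi [a [phil phie ->]]].
  apply: lspan_in; exists (fun a => mB (phi a) x), a; split => //.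
    by move=> k a1 a2 /=; rewrite phil mdl.
  by move=> z a' /=; rewrite phie massoc.
have It_left x y : It_set mB t y -> It_set mB t (mB x y).
  apply: (lspan_map (f := fun b => mB x b) (Bl x) ItS) => _ [psi [a [psil psie ->]]].
  apply: lspan_in; exists (fun a => mB x (psi a)), a; split => //.
    by move=> k a1 a2 /=; rewrite psil mdr.
  by move=> z a' /=; rewrite psie massoc.
have It_right x y : It_set mB t y -> It_set mB t (mB y x).
  apply: (lspan_map (f := fun b => mB b x) (Br x) ItS) => _ [psi [a [psil psie ->]]].
  by apply: lspan_in; exists psi, (t x a); split => //; rewrite psie.
have Is_sub y : Is_set mB s y -> prodset mB (It_set mB t) (Is_set mB s) y.
  apply: (lspan_sub P12S) => _ [phi [a [phil phie ->]]].
  have ha := proj2 (h1 a) I.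
  apply: (lspan_map phil P12S _ ha) => _ [x [a' [hx ->]]].
  rewrite phie; apply: lspan_in; exists x, (phi a'); split => //.
  by apply: lspan_in; exists phi, a'.
have It_sub y : It_set mB t y -> prodset mB (It_set mB t) (Is_set mB s) y.
  apply: (lspan_sub P12S) => _ [psi [a [psil psie ->]]].
  have ha := proj2 (h2 a) I.
  apply: (lspan_map psil P12S _ ha) => _ [x [a' [hx ->]]].
  rewrite psie; apply: lspan_in; exists (psi a'), x; split => //.
  by apply: lspan_in; exists psi, a'.
have P12_It y : prodset mB (It_set mB t) (Is_set mB s) y -> It_set mB t y.
  by apply: (lspan_sub ItS) => _ [a [b [ha hb ->]]]; apply: It_right.
have P12_Is y : prodset mB (It_set mB t) (Is_set mB s) y -> Is_set mB s y.
  by apply: (lspan_sub IsS) => _ [a [b [ha hb ->]]]; apply: Is_left.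
have It_Is y : It_set mB t y -> Is_set mB s y by move=> h; apply: P12_Is; apply: It_sub.
have Z0 : is_subspace (fun v : A => v = 0).
  by split => // k u v -> ->; rewrite scaler0 addr0.
split.
- by move=> y; split; [apply: It_sub | apply: P12_It].
- by move=> y; split; [apply: P12_Is | apply: Is_sub].
- by split => // x y hy; split; [apply: Is_left | apply: Is_right].
- move=> y; split.
    by apply: (lspan_sub IsS) => _ [a [b [ha hb ->]]]; apply: Is_left.
  move=> /Is_sub; apply: (lspan_sub (lspan_subspace _)) => _ [a [b [ha hb ->]]].
  by apply: lspan_in; exists a, b; split => //; apply: It_Is.
- move=> x [h|h].
  + apply: (sinj x 0) => a.
    have s0 b : s 0 b = 0 by apply: (lin0 (f := fun x => s x b)) => k u v; apply: slin.
    rewrite s0; have ha := proj2 (h1 a) I.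
    have := lspan_map (sl x) Z0 _ ha; apply.
    move=> _ [y [a' [hy ->]]].
    by rewrite -smul h ?s0 //; apply: It_Is.
  + apply: (tinj x 0) => a.
    have t0 b : t 0 b = 0 by apply: (lin0 (f := fun x => t x b)) => k u v; apply: tlin.
    rewrite t0; have ha := proj2 (h2 a) I.
    have := lspan_map (tl x) Z0 _ ha; apply.
    move=> _ [y [a' [hy ->]]].
    by rewrite -tmul h ?t0.
Qed.
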